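(* Let $\mathbf A$ be an interior $r\ell u$-groupoid and $\mathbf B$ a partial subalgebra of $\mathbf A$. Then the map $b\mapsto\{(\mathrm{id},b)\}^{\lhd}$ from $B$ to the universe of $\mathbf F^+_{\mathbf A,\mathbf B}$ is an embedding of the partial algebra $\mathbf B$ into $\mathbf F^+_{\mathbf A,\mathbf B}$. The same holds if $\mathbf A$ is an interior $r\ell uz$-groupoid and $0^{\mathbf A}\in B$, where $\mathbf F_{\mathbf A,\mathbf B}$ is taken as an enriched $ruz$-frame with $\epsilon=(\mathrm{id},0^{\mathbf A})$.
   Context: An $r\ell u$-groupoid is an algebra $(A,\wedge,\vee,\cdot,\backslash,/,1)$ with $(A,\wedge,\vee)$ a lattice (order $\le$), $(A,\cdot,1)$ a unital groupoid (binary operation, not necessarily associative, with two-sided unit $1$), and $x\cdot y\le z\iff y\le x\backslash z\iff x\le z/y$; an $r\ell uz$-groupoid additionally has an arbitrary constant $0$. An interior one has a unary $!$ with $1\le !1$, $!x\cdot!y\le !(x\cdot y)$, $!x\le x$, $!x\le !!x$, $x\le y\Rightarrow !x\le !y$. A partial subalgebra $\mathbf B$ of $\mathbf A$ is a subset $B$ with $f^{\mathbf B}(\vec b)=f^{\mathbf A}(\vec b)$ if this lies in $B$, undefined otherwise. An embedding of a partial algebra $\mathbf B$ into an algebra $\mathbf D$ is an injective map $h$ with $h(f^{\mathbf B}(\vec b))=f^{\mathbf D}(h(\vec b))$ whenever the left side is defined. Enriched $ru$-frame: $(G,T,N,K)$ with $(G,\cdot,\varepsilon)$ a unital groupoid,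 $T$ a set, $N\subseteq G\times T$ nuclear (for all $x,y\in G,z\in T$ there are $x\backslash\!\!\backslash z, z/\!\!/y\in T$ with $x\cdot y\,N\,z\iff y\,N\,x\backslash\!\!\backslash z\iff x\,N\,z/\!\!/y$), $K$ a sub-unital-groupoid of $G$; an enriched $ruz$-frame additionally has $\epsilon\in T$. $X^{\rhd}=\{t\mid\forall x\in X\,xNt\}$, $Y^{\lhd}=\{g\mid\forall y\in Y\,gNy\}$, $\gamma_N(X)=X^{\rhd\lhd}$. $\mathbf F^+$: universe the closed sets ($\gamma_N(X)=X$), $X\wedge Y=X\cap Y$, $X\vee Y=\gamma_N(X\cup Y)$, $X\cdot Y=\gamma_N(X\circ Y)$ with $X\circ Y=\{x\cdot y\}$, $X\backslash Y=\{z\mid X\circ\{z\}\subseteq Y\}$, $Y/X=\{z\mid \{z\}\circ X\subseteq Y\}$, $!X=\gamma_N(X\cap K)$, unit $\gamma_N(\{\varepsilon\})$, and in the $ruz$ case zero $\{\epsilon\}^{\lhd}$. $\mathbf F_{\mathbf A,\mathbf B}=(G_B,T_B,N_B,K_B)$: $G_B$ the sub-unital-groupoid of $(A,\cdot,1)$ generated by $B$; $U_{G_B}$ the unary linear polynomials over $G_B$ (maps given by a groupoid term with one variable occurring exactly once and other leaves in $G_B$, including $\mathrm{id}$); $T_B=U_{G_B}\times B$; $x\,N_B\,(u,b)$ iff $u(x)\le^{\mathbf A}b$; $K_B$ the sub-unital-groupoid generated by $\{!^{\mathbf A}b\mid b\in B,\ !^{\mathbf A}b\in B\}$. *)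

(* Defs.v *)
Set Implicit Arguments.

Record IRLU := {
  car :> Type;
  meet : car -> car -> car;
  join : car -> car -> car;
  mul  : car -> car -> car;
  ldiv : car -> car -> car;
  rdiv : car -> car -> car;
  one  : car;
  bang : car -> car;
  meet_assoc : forall x y z, meet x (meet y z) = meet (meet x y) z;
  join_assoc : forall x y z, join x (join y z) = join (join x y) z;
  meet_comm  : forall x y, meet x y = meet y x;
  join_comm  : forall x y, join x y = join y x;
  meet_absorb : forall x y, meet x (join x y) = x;
  join_absorb : forall x y, join x (meet x y) = x;
  mul_1l : forall x, mul one x = x;
  mul_1r : forall x, mul x one = x;
  (* residuation, with x <= y := meet x y = x *)
  res_l : forall x y z, meet (mul x y) z = mul x y <-> meet y (ldiv x z) = y;
  res_r : forall x y z, meet (mul x y) z = mul x y <-> meet x (rdiv z y) = x;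
  bang_one : meet one (bang one) = one;
  bang_mul : forall x y, meet (mul (bang x) (bang y)) (bang (mul x y)) = mul (bang x) (bang y);
  bang_defl : forall x, meet (bang x) x = bang x;
  bang_idem : forall x, meet (bang x) (bang (bang x)) = bang x;
  bang_mono : forall x y, meet x y = x -> meet (bang x) (bang y) = bang x
}.

Definition le (A : IRLU) (x y : A) : Prop := meet A x y = x.

Section Frame.
Variables (A : IRLU) (B : A -> Prop).

Inductive inG : A -> Prop :=
| inG_B : forall b, B b -> inG b
| inG_one : inG (one A)
| inG_mul : forall x y, inG x -> inG y -> inG (mul A x y).

Inductive inK : A -> Prop :=
| inK_gen : forall b, B b -> B (bang A b) -> inK (bang A b)
| inK_one : inK (one A)
| inK_mul : forall x y, inK x -> inK y -> inK (mul A x y).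

(** unary linear polynomials: groupoid terms with exactly one occurrence of
    the variable; the subterms not containing the variable are represented by
    their values, which are exactly the elements of G_B *)
Inductive upoly : Type :=
| PHole : upoly
| PMulL : A -> upoly -> upoly
| PMulR : upoly -> A -> upoly.

Fixpoint peval (u : upoly) (x : A) : A :=
  match u with
  | PHole => x
  | PMulL a v => mul A a (peval v x)
  | PMulR v a => mul A (peval v x) a
  end.

Fixpoint pvalid (u : upoly) : Prop :=
  match u with
  | PHole => True
  | PMulL a v => inG a /\ pvalid v
  | PMulR v a => pvalid v /\ inG a
  end.

Definition inT (t : upoly * A) : Prop := pvalid (fst t) /\ B (snd t).

Definition NB (x : A) (t : upoly * A) : Prop := @le A (peval (fst t) x) (snd t).

Definition rhd (X : A -> Prop) : upoly * A -> Prop :=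
  fun t => inT t /\ forall x, inG x -> X x -> NB x t.
Definition lhd (Y : upoly * A -> Prop) : A -> Prop :=
  fun g => inG g /\ forall t, inT t -> Y t -> NB g t.
Definition gammaN (X : A -> Prop) : A -> Prop := lhd (rhd X).

Definition seteq (X Y : A -> Prop) : Prop := forall g, X g <-> Y g.

(** universe of F^+ : closed subsets of G_B *)
Definition closed (X : A -> Prop) : Prop :=
  (forall g, X g -> inG g) /\ seteq (gammaN X) X.

Definition meetF (X Y : A -> Prop) : A -> Prop := fun g => X g /\ Y g.
Definition joinF (X Y : A -> Prop) : A -> Prop := gammaN (fun g => X g \/ Y g).
Definition circ (X Y : A -> Prop) : A -> Prop :=
  fun g => exists x y, X x /\ Y y /\ g = mul A x y.
Definition mulF (X Y : A -> Prop) : A -> Prop := gammaN (circ X Y).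
Definition ldivF (X Y : A -> Prop) : A -> Prop :=
  fun z => inG z /\ forall x, X x -> Y (mul A x z).
Definition rdivF (Y X : A -> Prop) : A -> Prop :=
  fun z => inG z /\ forall x, X x -> Y (mul A z x).
Definition bangF (X : A -> Prop) : A -> Prop := gammaN (fun g => X g /\ inK g).
Definition oneF : A -> Prop := gammaN (fun g => g = one A).
(** zero of F^+ in the ruz case, with epsilon = (id, z) *)
Definition zeroF (z : A) : A -> Prop := lhd (fun t => t = (PHole, z)).

Definition emb (b : A) : A -> Prop := lhd (fun t => t = (PHole, b)).

(** emb is an embedding of the partial subalgebra B into F^+_{A,B}:
    values lie in the universe, injective on B, and it commutes with every
    operation whenever the partial operation of B is defined
    (i.e. the value in A lies in B). *)
Definition IsEmbedding : Prop :=
  (forall b, B b -> closed (emb b)) /\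
  (forall b c, B b -> B c -> seteq (emb b) (emb c) -> b = c) /\
  (forall b c, B b -> B c -> B (meet A b c) ->
     seteq (emb (meet A b c)) (meetF (emb b) (emb c))) /\
  (forall b c, B b -> B c -> B (join A b c) ->
     seteq (emb (join A b c)) (joinF (emb b) (emb c))) /\
  (forall b c, B b -> B c -> B (mul A b c) ->
     seteq (emb (mul A b c)) (mulF (emb b) (emb c))) /\
  (forall b c, B b -> B c -> B (ldiv A b c) ->
     seteq (emb (ldiv A b c)) (ldivF (emb b) (emb c))) /\
  (forall b c, B b -> B c -> B (rdiv A b c) ->
     seteq (emb (rdiv A b c)) (rdivF (emb b) (emb c))) /\
  (forall b, B b -> B (bang A b) ->
     seteq (emb (bang A b)) (bangF (emb b))) /\
  (B (one A) -> seteq (emb (one A)) oneF).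

Definition IsEmbeddingZ (z : A) : Prop :=
  IsEmbedding /\ seteq (emb z) (zeroF z).

End Frame.

(* Main.v *)
Require Import Defs.
From Stdlib Require Import Setoid.

Lemma meet_idem (A : IRLU) (x : A) : meet A x x = x.
Proof.
  pose proof (meet_absorb A x (meet A x x)) as H.
  rewrite (join_absorb A x x) in H. exact H.
Qed.

Lemma le_refl (A : IRLU) (x : A) : le A x x.
Proof. unfold le; apply meet_idem. Qed.

Lemma le_trans (A : IRLU) (x y z : A) : le A x y -> le A y z -> le A x z.
Proof.
  unfold le; intros H1 H2. rewrite <- H1, <- meet_assoc, H2. reflexivity.
Qed.

Lemma le_antisym (A : IRLU) (x y : A) : le A x y -> le A y x -> x = y.
Proof. unfold le; intros H1 H2. rewrite <- H1, meet_comm. exact H2. Qed.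

Lemma meet_lb1 (A : IRLU) (x y : A) : le A (meet A x y) x.
Proof.
  unfold le. rewrite (meet_comm A (meet A x y) x), meet_assoc, meet_idem. reflexivity.
Qed.

Lemma meet_lb2 (A : IRLU) (x y : A) : le A (meet A x y) y.
Proof.
  unfold le. rewrite <- meet_assoc, meet_idem. reflexivity.
Qed.

Lemma meet_glb (A : IRLU) (g b c : A) : le A g b -> le A g c -> le A g (meet A b c).
Proof. unfold le; intros H1 H2. rewrite meet_assoc, H1, H2. reflexivity. Qed.

Lemma join_ub1 (A : IRLU) (x y : A) : le A x (join A x y).
Proof. unfold le. apply meet_absorb. Qed.

Lemma join_ub2 (A : IRLU) (x y : A) : le A y (join A x y).
Proof. rewrite join_comm. apply join_ub1. Qed.

Lemma join_lub (A : IRLU) (x y z : A) : le A x z -> le A y z -> le A (join A x y) z.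
Proof.
  unfold le; intros H1 H2.
  assert (Hx : join A x z = z).
  { rewrite <- H1, join_comm, meet_comm. apply join_absorb. }
  assert (Hy : join A y z = z).
  { rewrite <- H2, join_comm, meet_comm. apply join_absorb. }
  assert (Hj : join A (join A x y) z = z).
  { rewrite <- join_assoc, Hy, Hx. reflexivity. }
  rewrite <- Hj. apply meet_absorb.
Qed.

Lemma res_l' (A : IRLU) (x y z : A) : le A (mul A x y) z <-> le A y (ldiv A x z).
Proof. apply res_l. Qed.
Lemma res_r' (A : IRLU) (x y z : A) : le A (mul A x y) z <-> le A x (rdiv A z y).
Proof. apply res_r. Qed.

Lemma mul_monoR (A : IRLU) (x y z : A) : le A y z -> le A (mul A x y) (mul A x z).
Proof.
  intro H. apply res_l'. eapply le_trans; [exact H|]. apply res_l'. apply le_refl.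
Qed.

Lemma mul_monoL (A : IRLU) (x y z : A) : le A y z -> le A (mul A y x) (mul A z x).
Proof.
  intro H. apply res_r'. eapply le_trans; [exact H|]. apply res_r'. apply le_refl.
Qed.

Lemma mul_mono (A : IRLU) (x y x' y' : A) : le A x x' -> le A y y' ->
  le A (mul A x y) (mul A x' y').
Proof.
  intros H1 H2. eapply le_trans. apply mul_monoL; exact H1. apply mul_monoR; exact H2.
Qed.

Lemma peval_mono (A : IRLU) (u : upoly A) (x y : A) : le A x y -> le A (peval u x) (peval u y).
Proof.
  induction u; simpl; intro H.
  - exact H.
  - apply mul_monoR; auto.
  - apply mul_monoL; auto.
Qed.

Lemma peval_join (A : IRLU) (u : upoly A) (b c d : A) :
  le A (peval u b) d -> le A (peval u c) d -> le A (peval u (join A b c)) d.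
Proof.
  revert d; induction u; simpl; intros d H1 H2.
  - apply join_lub; auto.
  - apply res_l'. apply IHu; apply res_l'; auto.
  - apply res_r'. apply IHu; apply res_r'; auto.
Qed.

Lemma bang_K {A : IRLU} (B : A -> Prop) (k : A) : inK A B k -> le A k (bang A k).
Proof.
  induction 1.
  - apply bang_idem.
  - apply bang_one.
  - eapply le_trans. apply mul_mono; eassumption. apply bang_mul.
Qed.

Lemma emb_iff {A : IRLU} (B : A -> Prop) (b g : A) : B b ->
  (emb A B b g <-> inG A B g /\ le A g b).
Proof.
  intro Hb. unfold emb, lhd. split.
  - intros [HG H]. split; auto. apply (H (PHole A, b)); [split; simpl; auto | reflexivity].
  - intros [HG H]. split; auto. intros t _ ->. exact H.
Qed.

Lemma gamma_sub {A : IRLU} (B : A -> Prop) (X : A -> Prop) (g : A) :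
  X g -> inG A B g -> gammaN A B X g.
Proof.
  intros HX HG. split; auto. intros t _ [_ H]. apply H; auto.
Qed.

Lemma gamma_test {A : IRLU} (B : A -> Prop) (X : A -> Prop) {g d : A} :
  B d -> (forall x, inG A B x -> X x -> le A x d) -> gammaN A B X g -> le A g d.
Proof.
  intros Hd H [HG Hg]. apply (Hg (PHole A, d)). split; simpl; auto.
  split. split; simpl; auto. intros x Hx HX. apply H; auto.
Qed.

Theorem mainTheorem8 :
  (forall (A : IRLU) (B : A -> Prop), @IsEmbedding A B) /\
  (forall (A : IRLU) (zero : A) (B : A -> Prop), B zero -> @IsEmbeddingZ A B zero).
Proof.
  assert (Main : forall (A : IRLU) (B : A -> Prop), @IsEmbedding A B).
  2: { split; auto. intros A z B Hz. split; auto. intro g. unfold zeroF, emb. tauto. }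
  intros A B.
  split; [|split; [|split; [|split; [|split; [|split; [|split; [|split]]]]]]].
  -
    intros b Hb. split.
    + intros g Hg. apply (emb_iff B b g Hb) in Hg. tauto.
    + intro g. split.
      * intro Hg. apply (emb_iff B b g Hb). split; [apply Hg|].
        apply (gamma_test B (emb A B b) Hb); auto.
        intros x _ Hx. apply (emb_iff B b x Hb) in Hx. tauto.
      * intro Hg. apply gamma_sub; auto. apply (emb_iff B b g Hb) in Hg; tauto.
  - intros b c Hb Hc H. apply le_antisym.
    + assert (emb A B c b) as Hcb.
      { apply H. apply emb_iff; auto. split; [constructor; auto | apply le_refl]. }
      apply emb_iff in Hcb; tauto.
    + assert (emb A B b c) as Hcb.
      { apply H. apply emb_iff; auto. split; [constructor; auto | apply le_refl]. }
      apply emb_iff in Hcb; tauto.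
  - intros b c Hb Hc Hm g. unfold meetF.
    rewrite (emb_iff B _ g Hm), (emb_iff B _ g Hb), (emb_iff B _ g Hc).
    split.
    + intros [HG H]. repeat split; auto; eapply le_trans; eauto using meet_lb1, meet_lb2.
    + intros [[HG H1] [_ H2]]. split; auto. apply meet_glb; auto.
  - intros b c Hb Hc Hj g. unfold joinF. rewrite (emb_iff B _ g Hj). split.
    + intros [HG H]. split; auto. intros [u d] [Hu Hd] [_ Ht]. unfold NB; simpl.
      assert (Ub : le A (peval u b) d).
      { apply (Ht b). constructor; auto. left. apply emb_iff; auto.
        split; [constructor; auto| apply le_refl]. }
      assert (Uc : le A (peval u c) d).
      { apply (Ht c). constructor; auto. right. apply emb_iff; auto.
        split; [constructor; auto| apply le_refl]. }
      eapply le_trans. apply peval_mono; exact H. apply peval_join; auto.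
    + intro H. split; [apply H|]. refine (gamma_test B _ Hj _ H).
      intros x _ [Hx|Hx].
      * apply emb_iff in Hx; auto. eapply le_trans; [apply Hx|apply join_ub1].
      * apply emb_iff in Hx; auto. eapply le_trans; [apply Hx|apply join_ub2].
  - intros b c Hb Hc Hm g. unfold mulF. rewrite (emb_iff B _ g Hm). split.
    + intros [HG H]. split; auto. intros [u d] [Hu Hd] [_ Ht]. unfold NB; simpl.
      assert (U : le A (peval u (mul A b c)) d).
      { apply (Ht (mul A b c)). constructor; auto. exists b, c.
        split; [apply emb_iff; auto; split; [constructor; auto| apply le_refl]|].
        split; [apply emb_iff; auto; split; [constructor; auto| apply le_refl]|].
        reflexivity. }
      eapply le_trans. apply peval_mono; exact H. exact U.
    + intro H. split; [apply H|]. refine (gamma_test B _ Hm _ H).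
      intros x _ [x1 [x2 [H1 [H2 ->]]]].
      apply emb_iff in H1; auto. apply emb_iff in H2; auto.
      apply mul_mono; tauto.
  - intros b c Hb Hc Hm g. unfold ldivF. rewrite (emb_iff B _ g Hm). split.
    + intros [HG H]. split; auto. intros x Hx. apply emb_iff in Hx; auto.
      apply emb_iff; auto. split. constructor; tauto.
      eapply le_trans. apply mul_monoL; apply Hx. apply res_l'; auto.
    + intros [HG H]. split; auto. apply res_l'.
      assert (emb A B c (mul A b g)) as Hbg.
      { apply H. apply emb_iff; auto. split; [constructor; auto | apply le_refl]. }
      apply emb_iff in Hbg; tauto.
  - intros b c Hb Hc Hm g. unfold rdivF. rewrite (emb_iff B _ g Hm). split.
    + intros [HG H]. split; auto. intros x Hx. apply emb_iff in Hx; auto.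
      apply emb_iff; auto. split. constructor; tauto.
      eapply le_trans. apply mul_monoR; apply Hx. apply res_r'; auto.
    + intros [HG H]. split; auto. apply res_r'.
      assert (emb A B b (mul A g c)) as Hbg.
      { apply H. apply emb_iff; auto. split; [constructor; auto | apply le_refl]. }
      apply emb_iff in Hbg; tauto.
  - intros b Hb Hbb g. unfold bangF. rewrite (emb_iff B _ g Hbb). split.
    + intros [HG H]. split; auto. intros [u d] [Hu Hd] [_ Ht]. unfold NB; simpl.
      assert (U : le A (peval u (bang A b)) d).
      { apply (Ht (bang A b)). constructor; auto. split.
        apply emb_iff; auto. split; [constructor; auto| apply bang_defl].
        constructor; auto. }
      eapply le_trans. apply peval_mono; exact H. exact U.
    + intro H. split; [apply H|]. refine (gamma_test B _ Hbb _ H).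
      intros x _ [Hx HK]. apply emb_iff in Hx; auto.
      eapply le_trans. apply (bang_K B _ HK). apply bang_mono. apply Hx.
  - intros H1 g. unfold oneF. rewrite (emb_iff B _ g H1). split.
    + intros [HG H]. split; auto. intros [u d] [Hu Hd] [_ Ht]. unfold NB; simpl.
      assert (U : le A (peval u (one A)) d).
      { apply (Ht (one A)). constructor; auto. reflexivity. }
      eapply le_trans. apply peval_mono; exact H. exact U.
    + intro H. split; [apply H|]. refine (gamma_test B _ H1 _ H).
      intros x _ ->. apply le_refl.
Qed.
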